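(* Let $N\ge 2$ be an integer and $b_1,\dots,b_N\in\{0,1\}$ with $b_N=1$, and suppose $b:=\sum_{j=1}^N b_j2^{-j}$ satisfies $2^N b>1$ ($2^Nb$ is then an odd integer). Let $P_b(x)=x^N-\sum_{j=1}^N b_jx^{N-j}$. Then $P_b$ has a real root, and its largest real root $s_b$ (the silver number of index $b$) satisfies $1<s_b<2$. *)

(* Defs.v *)
From HB Require Import structures.
From mathcomp Require Import all_boot all_order all_algebra.
From mathcomp Require Import all_reals.
Set Implicit Arguments. Unset Strict Implicit. Unset Printing Implicit Defensive.
Import Order.TTheory GRing.Theory Num.Theory.

(* Digits b_1,...,b_N are given by b : nat -> bool, only indices 1..N matter. *)

(* 2^N * b = \sum_{j=1}^N b_j 2^(N-j)  (a natural number) *)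
Definition scaled_b (N : nat) (b : nat -> bool) : nat :=
  \sum_(1 <= j < N.+1) (b j) * 2 ^ (N - j).

Local Open Scope ring_scope.

Definition Pb (R : nzRingType) (N : nat) (b : nat -> bool) : {poly R} :=
  'X^N - \sum_(1 <= j < N.+1) (b j)%:R *: 'X^(N - j).

(* Main.v *)
Require Import Defs.
From HB Require Import structures.
From mathcomp Require Import all_boot all_order all_algebra.
From mathcomp Require Import all_reals.
From mathcomp Require Import polyrcf lra zify.
Import Order.TTheory GRing.Theory Num.Theory.
Local Open Scope ring_scope.

Lemma seq_max (R : realType) (l : seq R) (r0 : R) :
  exists2 m, m \in r0 :: l & forall x, x \in r0 :: l -> x <= m.
Proof.
elim: l r0 => [|a l IH] r0.
  by exists r0 => [|x]; rewrite ?mem_seq1 // => /eqP->.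
have [m mI mM] := IH r0.
have [am|ma] := leP a m.
  exists m; first by move: mI; rewrite !inE => /orP[->|->]; rewrite ?orbT.
  move=> x; rewrite !inE => /orP[/eqP->|/orP[/eqP->|xl]] //.
  - by apply: mM; rewrite inE eqxx.
  - by apply: mM; rewrite inE xl orbT.
exists a; first by rewrite !inE eqxx orbT.
move=> x; rewrite !inE => /orP[/eqP->|/orP[/eqP->|xl]] //.
- by apply: le_trans (ltW ma); apply: mM; rewrite inE eqxx.
- by apply: le_trans (ltW ma); apply: mM; rewrite inE xl orbT.
Qed.

Arguments seq_max {R}.
Lemma largest_root (R : realType) (p : {poly R}) (r0 : R) :
  p != 0 -> root p r0 -> exists2 s, root p s & forall x, root p x -> x <= s.
Proof.
move=> p0 rr0.
have H := roots_on_rootsR p0.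
have [m mI mM] := seq_max (rootsR p) r0.
exists m.
  move: mI; rewrite inE => /orP[/eqP->//|mI].
  by have := H m; rewrite mI /= => ->.
move=> x rx; apply: mM; rewrite inE; apply/orP; right.
by have := H x; rewrite rx /= => <-.
Qed.

Lemma Pb_eval (R : realType) N b (x : R) :
  (Pb R N b).[x] = x ^+ N - \sum_(1 <= j < N.+1) (b j)%:R * x ^+ (N - j).
Proof.
rewrite /Pb hornerD hornerN horner_sum hornerXn; congr (_ - _).
by apply: eq_bigr => j _; rewrite hornerZ hornerXn.
Qed.

Lemma geom_bound (R : realType) N (x : R) : 2 <= x ->
  \sum_(1 <= j < N.+1) x ^+ (N - j) + 1 <= x ^+ N.
Proof.
move=> x2.
have -> : \sum_(1 <= j < N.+1) x ^+ (N - j) = \sum_(i < N) x ^+ i.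
  rewrite big_nat_rev /= big_add1 /= big_mkord; apply: eq_bigr => i _.
  congr (_ ^+ _); rewrite add1n; have := ltn_ord i; lia.
have := subrX1 x N.
set S := \sum_(i < N) _ => e.
have S0 : 0 <= S by apply: sumr_ge0 => k _; apply: exprn_ge0; lra.
have : S <= (x - 1) * S by rewrite ler_peMl //; lra.
lra.
Qed.

Lemma count_ge2 N (b : nat -> bool) :
  (2 <= N)%N -> b N = true -> (1 < scaled_b N b)%N ->
  (2 <= \sum_(1 <= j < N.+1) (b j : nat))%N.
Proof.
move=> N2 bN; rewrite /scaled_b !big_nat_recr /= ?(leq_trans _ N2) // bN subnn expn0.
set s1 := (\sum_(1 <= i < N) _)%N; set s2 := (\sum_(1 <= i < N) _)%N.
have : (s1 <= s2 * 2 ^ N)%N.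
  rewrite /s1 /s2 big_distrl /=; apply: leq_sum => j _.
  by rewrite leq_mul2l leq_pexp2l ?leq_subr ?orbT.
case: s2 => [|k]; last by move=> _ _; lia.
rewrite mul0n leqn0 => /eqP->; lia.
Qed.

Theorem mainTheorem4 (R : realType) (N : nat) (b : nat -> bool) :
  (2 <= N)%N -> b N = true -> (1 < scaled_b N b)%N ->
  exists s : R,
    [/\ root (Pb R N b) s,
        (forall x : R, root (Pb R N b) x -> x <= s)
      & 1 < s < 2].
Proof.
move=> N2 bN sc.
set p := Pb R N b.
have pos : forall x : R, 2 <= x -> 0 < p.[x].
  move=> x x2; rewrite /p Pb_eval.
  have := @geom_bound R N x x2.
  have : \sum_(1 <= j < N.+1) (b j)%:R * x ^+ (N - j) <= \sum_(1 <= j < N.+1) x ^+ (N - j).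
    apply: ler_sum => j _; case: (b j); rewrite ?mul1r ?mul0r //.
    by apply: exprn_ge0; lra.
  lra.
have neg : p.[1] < 0.
  rewrite /p Pb_eval expr1n.
  have -> : \sum_(1 <= j < N.+1) (b j)%:R * (1 : R) ^+ (N - j)
          = (\sum_(1 <= j < N.+1) (b j : nat))%:R.
    rewrite natr_sum; apply: eq_bigr => j _; by rewrite expr1n mulr1.
  have := @count_ge2 N b N2 bN sc; rewrite -(ler_nat R) => h.
  have : (2%N%:R : R) = 2 by [].
  lra.
have p2 := pos 2 (lexx _).
have p0 : p != 0 by apply/negP => /eqP e; move: p2; rewrite e horner0 ltxx.
have h12 : (1 : R) <= 2 by lra.
have hm : p.[1] <= 0 <= p.[2] by rewrite !ltW.
have [r0 r0I rr0] := poly_ivt h12 hm.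
have [s rs sM] := @largest_root R p r0 p0 rr0.
exists s; split => //.
move: r0I => /andP[r1 _].
have s1 : 1 <= s by apply: le_trans r1 (sM _ rr0).
apply/andP; split.
  rewrite lt_neqAle s1 andbT; apply/eqP => e.
  by move: rs neg; rewrite /root -e => /eqP->; rewrite ltxx.
rewrite ltNge; apply/negP => /pos; move: rs; rewrite /root => /eqP->.
by rewrite ltxx.
Qed.
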